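(* Let $\mathbb{F}$ be a field and let $(\mathscr{P},\mathscr{B},\mathrm{I})$ be the affine plane over $\mathbb{F}$: $\mathscr{P}=\mathbb{F}\times\mathbb{F}$; the lines are the vertical lines $L_b$ ($b\in\mathbb{F}$) and the non-vertical lines $L_{m,b}$ ($m,b\in\mathbb{F}$); and the incidence is given by $(b,y)\ \mathrm{I}\ L_b$ for all $y\in\mathbb{F}$ and $(x,mx+b)\ \mathrm{I}\ L_{m,b}$ for all $x\in\mathbb{F}$. Let $\Gamma$ be its incidence graph, take the gain group to be $(\mathbb{F},+)$ acting on $\Lambda=\mathbb{F}$ by addition, and define the gain function $\varphi$ on edges by $$\varphi(e)=\begin{cases}-by, & \text{if } e=\{L_b,(b,y)\},\\ xb, & \text{if } e=\{L_{m,b},(x,mx+b)\}.\end{cases}$$ Then $\mathfrak{M}(\Gamma,\varphi)$ is a generalized quadrangle.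
   Context: An incidence structure is a triple $(\mathscr{P},\mathscr{B},\mathrm{I})$ where $\mathscr{P}$ (points) and $\mathscr{B}$ (lines) are nonempty disjoint sets and $\mathrm{I}\subseteq\mathscr{P}\times\mathscr{B}$ is a nonempty incidence relation; write $p\ \mathrm{I}\ b$ or $b\ \mathrm{I}\ p$ when $(p,b)\in\mathrm{I}$. Its incidence graph $\Gamma$ is the bipartite graph with vertex set $\mathscr{P}\cup\mathscr{B}$ and an edge $bp$ for each incident pair $b\ \mathrm{I}\ p$; every edge is oriented from its line to its point. A gain function with gain group $G$ assigns to each edge $e$ an element $\varphi(e)\in G$ (extended to a homomorphism on the free group on the edges, so $\varphi(e^{-1})=\varphi(e)^{-1}$). The gain group acts on a nonempty set $\Lambda$ on the left. Construction $\mathfrak{M}(\Gamma,\varphi)$: the incidence structure $(\mathscr{P}',\mathscr{B}',\mathrm{I}')$ whose points are the formal symbols $x_p$ ($p\in\mathscr{P}$) and $y_{b,\lambda}$ ($b\in\mathscr{B},\lambda\in\Lambda$), whose lines are the formal symbols $z_{p,\lambda}$ ($p\in\mathscr{P},\lambda\in\Lambda$), and whose incidences are exactly: $x_p\ \mathrm{I}'\ z_{p,\lambda}$ for all $\lambda$, and $y_{b,\lambda}\ \mathrm{I}'\ z_{p,\mu}$ whenever $b\ \mathrm{I}\ p$ and $\mu=\varphi(bp)\cdot\lambda$. A $k$-chain is a sequence $(u_0,\dots,u_k)$ of elements of $\mathscr{P}\cup\mathscr{B}$ with $u_i$ incident with $u_{i-1}$ for $1\le i\le k$; the distance $d(u,v)$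 is the least $k$ such that a $k$-chain from $u$ to $v$ exists ($\infty$ if none). A generalized quadrangle is an incidence structure such that (1) $d(u,v)\le 4$ for all elements $u,v$, and (2) whenever $d(u,v)=k<4$ there is a unique $k$-chain from $u$ to $v$. *)

(* Defs.v *)
From mathcomp Require Import all_boot all_order all_algebra.
Set Implicit Arguments. Unset Strict Implicit. Unset Printing Implicit Defensive.
Import GRing.Theory.
Local Open Scope ring_scope.

Definition elt_inc (P B : Type) (I : P -> B -> Prop) (u v : P + B) : Prop :=
  match u, v with
  | inl p, inr b => I p b
  | inr b, inl p => I p b
  | _, _ => False
  end.

Fixpoint chain_from (E : Type) (R : E -> E -> Prop) (u : E) (s : list E) : Prop :=
  match s with
  | nil => True
  | x :: s' => R u x /\ chain_from R x s'
  end.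

Definition is_k_chain (P B : Type) (I : P -> B -> Prop) (k : nat) (u v : P + B)
  (s : list (P + B)) : Prop :=
  size s = k /\ last u s = v /\ chain_from (elt_inc I) u s.

Definition dist_is (P B : Type) (I : P -> B -> Prop) (u v : P + B) (k : nat) : Prop :=
  (exists s, is_k_chain I k u v s) /\
  (forall j s, (j < k)%N -> ~ is_k_chain I j u v s).

Definition is_incidence_structure (P B : Type) (I : P -> B -> Prop) : Prop :=
  inhabited P /\ inhabited B /\ exists p b, I p b.

Definition generalized_quadrangle (P B : Type) (I : P -> B -> Prop) : Prop :=
  is_incidence_structure I /\
  (forall u v : P + B, exists k, (k <= 4)%N /\ exists s, is_k_chain I k u v s) /\
  (forall (u v : P + B) (k : nat), (k < 4)%N -> dist_is I u v k ->
     forall s1 s2, is_k_chain I k u v s1 -> is_k_chain I k u v s2 -> s1 = s2).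

(** The construction M(Gamma, phi).  [phi b p] is the gain of the edge bp
    (oriented from line b to point p); [act] is the left action of the gain
    group G on Lambda.
    Points: [inl p] = x_p, [inr (b, l)] = y_{b,l}; lines: [(p, l)] = z_{p,l}. *)
Definition M_inc (P B G Lam : Type) (I : P -> B -> Prop) (act : G -> Lam -> Lam)
  (phi : B -> P -> G) (pt : P + (B * Lam)) (ln : P * Lam) : Prop :=
  match pt with
  | inl p => ln.1 = p
  | inr (b, l) => I ln.1 b /\ ln.2 = act (phi b ln.1) l
  end.

Inductive aff_line (F : Type) : Type :=
  | Vert of F
  | NonVert of F & F.

Definition aff_inc (F : fieldType) (p : F * F) (L : aff_line F) : Prop :=
  match L with
  | Vert b => p.1 = b
  | NonVert m b => p.2 = m * p.1 + b
  end.

(** Gain function: phi({L_b,(b,y)}) = -b y, phi({L_{m,b},(x,mx+b)}) = x b.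
    (Only its values on incident pairs are relevant.) *)
Definition aff_gain (F : fieldType) (L : aff_line F) (p : F * F) : F :=
  match L with
  | Vert b => - (b * p.2)
  | NonVert m b => p.1 * b
  end.

Definition add_act (F : fieldType) (a l : F) : F := a + l.

(* Main.v *)
Require Import Defs.
From mathcomp Require Import all_boot all_order all_algebra.
From mathcomp Require Import ring.
From Stdlib Require Import Classical.

Section Gen.
Variables (P B : Type) (I : P -> B -> Prop).
Notation R := (elt_inc I).

Lemma Rsym x y : R x y -> R y x.
Proof. by case: x => x; case: y => y. Qed.

Arguments Rsym {x y}.
Hypothesis PA : forall p1 p2 b1 b2, p1 <> p2 -> I p1 b1 -> I p2 b1 -> I p1 b2 -> I p2 b2 -> b1 = b2.
Hypothesis PB : forall p1 p2 p3 m1 m2 m3, I p1 m3 -> I p2 m3 -> I p2 m1 -> I p3 m1 ->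
  I p1 m2 -> I p3 m2 -> I p1 m1 \/ I p2 m2 \/ I p3 m3.

Lemma RA x y a b : x <> y -> R x a -> R y a -> R x b -> R y b -> a = b.
Proof.
case: x => x; case: y => y; case: a => a; case: b => b //= nxy h1 h2 h3 h4.
- congr inr; apply: (@PA x y a b _ h1 h2 h3 h4) => e; apply: nxy; congr inl; exact: e.
- apply: NNPP => nab; apply: nxy; congr inr.
  apply: (@PA a b x y) => //; by move=> e; apply: nab; rewrite e.
Qed.

Arguments RA {x y a b}.
Lemma RB x0 x1 x2 x3 x4 x5 : R x0 x1 -> R x1 x2 -> R x2 x3 -> R x3 x4 -> R x4 x5 -> R x5 x0 ->
  R x0 x3 \/ R x1 x4 \/ R x2 x5.
Proof.
case: x0 => x0; case: x1 => x1 //; case: x2 => x2 //; case: x3 => x3 //;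
  case: x4 => x4 //; case: x5 => x5 //= h1 h2 h3 h4 h5 h6.
- have := @PB x0 x2 x4 x3 x5 x1 h1 h2 h3 h4 h6 h5. tauto.
- have := @PB x1 x3 x5 x4 x0 x2 h2 h3 h4 h5 h1 h6. tauto.
Qed.

Arguments RB {x0 x1 x2 x3 x4 x5}.
Lemma uniq_chain (u v : P + B) (k : nat) : (k < 4)%N -> dist_is I u v k ->
     forall s1 s2, is_k_chain I k u v s1 -> is_k_chain I k u v s2 -> s1 = s2.
Proof.
move=> hk [_ hmin] s1 s2 [sz1 [l1 c1]] [sz2 [l2 c2]].
subst k.
case: s1 hk hmin l1 c1 sz2 => [|a1 [|b1 [|e1 [|d1 s1]]]] //= hk hmin l1 c1 sz2;
case: s2 sz2 l2 c2 => [|a2 [|b2 [|e2 [|d2 s2]]]] //= _ l2 c2.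
- by rewrite l1 l2.
- subst b1 b2; case: c1 c2 => [h1 [h2 _]] [h3 [h4 _]].
  case: (classic (a1 = a2)) => [->//|ne].
  have e := RA ne (Rsym h1) (Rsym h3) h2 h4.
  by exfalso; apply: (hmin 0%N [::]) => //; split => //; split => //=.
- subst e1 e2; case: c1 c2 => [h1 [h2 [h3 _]]] [h4 [h5 [h6 _]]].
  have no1 : ~ R u v by move=> huv; apply: (hmin 1%N [:: v]) => //; split => //; split => //=.
  have [e|[e|e]] := RB h1 h2 h3 (Rsym h6) (Rsym h5) (Rsym h4).
  + by [].
  + have eb : b1 = b2.
      apply: NNPP => ne; have ee := RA ne (Rsym h2) (Rsym e) h3 h6.
      by apply: no1; rewrite -ee.
    subst b2.
    have ea : a1 = a2.
      apply: NNPP => ne; have ee := RA ne (Rsym h1) (Rsym h4) h2 h5.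
      by apply: no1; rewrite ee.
    by subst.
  + have ea : a1 = a2.
      apply: NNPP => ne; have ee := RA ne (Rsym h1) (Rsym h4) h2 (Rsym e).
      by apply: no1; rewrite ee.
    subst a2.
    have eb : b1 = b2.
      apply: NNPP => ne; have ee := RA ne (Rsym h2) (Rsym h5) h3 h6.
      by apply: no1; rewrite -ee.
    by subst.
Qed.
End Gen.

Set Implicit Arguments. Unset Strict Implicit.
Import GRing.Theory.
Local Open Scope ring_scope.

Section Aff.
Variable F : fieldType.
Implicit Types (p q : F * F) (L : aff_line F).

Lemma aff_two q1 q2 L L' : q1 <> q2 -> aff_inc q1 L -> aff_inc q2 L ->
  aff_inc q1 L' -> aff_inc q2 L' -> L = L'.
Proof.
case: q1 => x1 y1; case: q2 => x2 y2.
case: L => [a|m b]; case: L' => [a'|m' b'] /= ne; rewrite /=.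
- by move=> e1 _ e3 _; rewrite -e1 -e3.
- move=> e1 e2 h1 h2; exfalso; apply: ne; by rewrite h1 h2 e1 e2.
- move=> h1 h2 e1 e2; exfalso; apply: ne; by rewrite h1 h2 e1 e2.
- move=> h1 h2 h3 h4.
  have [ex|nx] := eqVneq x1 x2.
    by exfalso; apply: ne; rewrite h1 h2 ex.
  have em : m = m'.
    have : (m - m') * (x1 - x2) = 0.
      have -> : (m - m') * (x1 - x2) = ((m * x1 + b) - (m' * x1 + b')) - ((m * x2 + b) - (m' * x2 + b')) by ring.
      by rewrite -h1 -h3 -h2 -h4 !subrr.
    move/eqP; rewrite mulf_eq0 subr_eq0 subr_eq0 (negbTE nx) orbF => /eqP //.
  subst m'; congr NonVert.
  by apply: (addrI (m * x1)); rewrite -h1 -h3.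
Qed.

Lemma solve_l (A l C : F) : A + l = C -> l = C - A.
Proof. by move=> <-; ring. Qed.

Lemma tri_nv L1 m2 b2 m3 b3 q1 q2 q3 l1 l2 l3 :
  L1 <> NonVert m2 b2 -> NonVert m2 b2 <> NonVert m3 b3 ->
  q1 <> q2 -> q2 <> q3 -> q1 <> q3 ->
  aff_inc q3 L1 -> aff_inc q3 (NonVert m2 b2) -> aff_inc q1 (NonVert m2 b2) ->
  aff_inc q1 (NonVert m3 b3) -> aff_inc q2 L1 -> aff_inc q2 (NonVert m3 b3) ->
  aff_gain L1 q3 + l1 = aff_gain (NonVert m2 b2) q3 + l2 ->
  aff_gain (NonVert m2 b2) q1 + l2 = aff_gain (NonVert m3 b3) q1 + l3 ->
  aff_gain L1 q2 + l1 = aff_gain (NonVert m3 b3) q2 + l3 -> False.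
Proof.
case: q1 => x1 y1; case: q2 => x2 y2; case: q3 => x3 y3.
case: L1 => [a|m1 b1] /= n12 n23 nq12 nq23 nq13.
- move=> h31 h32 h12 h13 h21 h23 E3 E1 E2.
  subst x3 x2 y3 y1 y2.
  move/esym/solve_l: h13 => hb3; subst b3.
  move/solve_l: E3 => hl1; subst l1.
  move/esym/solve_l: E1 => hl3; subst l3.
  have hd : m2 - m3 != 0.
    rewrite subr_eq0; apply/eqP => em; apply: n23; subst m3; congr NonVert; ring.
  have hx : x1 - a != 0.
    rewrite subr_eq0; apply/eqP => ex; apply: nq13; subst x1; done.
  have : (m2 - m3) * (x1 - a) ^+ 2 = 0.
    move: E2; set P := (X in X = _); set Q := (X in _ = X) => E2.
    have -> : (m2 - m3) * (x1 - a) ^+ 2 = P - Q by rewrite /P /Q; ring.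
    by rewrite E2 subrr.
  by move/eqP; rewrite mulf_eq0 expf_eq0 /= (negbTE hd) (negbTE hx).
- move=> h31 h32 h12 h13 h21 h23 E3 E1 E2.
  rewrite h32 in h31; rewrite h12 in h13; rewrite h23 in h21.
  subst y3 y1 y2.
  move/esym/solve_l: h31 => hb1; subst b1.
  move/esym/solve_l: h13 => hb3; subst b3.
  move/solve_l: E3 => hl1; subst l1.
  move/esym/solve_l: E1 => hl3; subst l3.
  have hd1 : m1 - m2 != 0.
    rewrite subr_eq0; apply/eqP => em; apply: n12; subst m1; congr NonVert; ring.
  have hd2 : m2 - m3 != 0.
    rewrite subr_eq0; apply/eqP => em; apply: n23; subst m3; congr NonVert; ring.
  have hx : x3 - x1 != 0.
    rewrite subr_eq0; apply/eqP => ex; apply: nq13; subst x1; done.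
  have : (m1 - m2) * (m2 - m3) * (x3 - x1) ^+ 2 = 0.
    move: E2; set P := (X in X = _); set Q := (X in _ = X) => E2.
    move: h21; set P' := (X in X = _); set Q' := (X in _ = X) => C.
    have -> : (m1 - m2) * (m2 - m3) * (x3 - x1) ^+ 2 =
      (m1 - m3) * (P - Q) + ((m1 - m3) * x2 - ((m1 - m2) * x3 + (m2 - m3) * x1 - (m3 - m1) * x2)) * (P' - Q')
      by rewrite /P /Q /P' /Q'; ring.
    by rewrite E2 C !subrr !mulr0 addr0.
  by move/eqP; rewrite !mulf_eq0 (negbTE hd1) (negbTE hd2) (negbTE hx).
Qed.

Lemma vv q a b : aff_inc q (Vert a) -> aff_inc q (Vert b) -> Vert a = Vert b.
Proof. by rewrite /= => <- <-. Qed.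

Lemma tri_core L1 L2 L3 q1 q2 q3 l1 l2 l3 :
  L1 <> L2 -> L2 <> L3 -> L1 <> L3 ->
  q1 <> q2 -> q2 <> q3 -> q1 <> q3 ->
  aff_inc q3 L1 -> aff_inc q3 L2 -> aff_inc q1 L2 ->
  aff_inc q1 L3 -> aff_inc q2 L1 -> aff_inc q2 L3 ->
  aff_gain L1 q3 + l1 = aff_gain L2 q3 + l2 ->
  aff_gain L2 q1 + l2 = aff_gain L3 q1 + l3 ->
  aff_gain L1 q2 + l1 = aff_gain L3 q2 + l3 -> False.
Proof.
move=> n12 n23 n13 nq12 nq23 nq13 h31 h32 h12 h13 h21 h23 E3 E1 E2.
have ne : forall (T : Type) (x y : T), x <> y -> y <> x by move=> T x y h e; apply: h.
case: L2 n12 n23 h32 h12 E3 E1 => [a2|m2 b2] n12 n23 h32 h12 E3 E1.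
- case: L3 n23 n13 h13 h23 E1 E2 => [a3|m3 b3] n23 n13 h13 h23 E1 E2.
    by apply: n23; apply: (vv h12 h13).
  case: L1 n12 n13 h31 h21 E3 E2 => [a1|m1 b1] n12 n13 h31 h21 E3 E2.
    by apply: n12; apply: (vv h31 h32).
  exact: (tri_nv n23 (ne _ _ _ n13) nq23 (ne _ _ _ nq13) (ne _ _ _ nq12)
     h12 h13 h23 h21 h32 h31 E1 (esym E2) (esym E3)).
- case: L3 n23 n13 h13 h23 E1 E2 => [a3|m3 b3] n23 n13 h13 h23 E1 E2.
  + case: L1 n12 n13 h31 h21 E3 E2 => [a1|m1 b1] n12 n13 h31 h21 E3 E2.
      by apply: n13; apply: (vv h21 h23).
    exact: (tri_nv (ne _ _ _ n13) n12 (ne _ _ _ nq13) nq12 (ne _ _ _ nq23)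
       h23 h21 h31 h32 h13 h12 (esym E2) E3 (esym E1)).
  + exact: (tri_nv n12 n23 nq12 nq23 nq13 h31 h32 h12 h13 h21 h23 E3 E1 E2).
Qed.

Notation PT := ((F * F) + (aff_line F * F))%type.
Notation LN := ((F * F) * F)%type.
Notation I := (M_inc (@aff_inc F) (@add_act F) (@aff_gain F)).

Lemma PA (p1 p2 : PT) (b1 b2 : LN) : p1 <> p2 -> I p1 b1 -> I p2 b1 -> I p1 b2 -> I p2 b2 -> b1 = b2.
Proof.
rewrite /add_act.
case: p1 => [x|[L l]]; case: p2 => [y|[L' l']]; case: b1 => q1 m1; case: b2 => q2 m2 /= ne.
- by move=> h1 h2 _ _; exfalso; apply: ne; rewrite -h1 -h2.
- by move=> h1 [_ e1] h3 [_ e2]; rewrite e1 e2 h1 h3.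
- by move=> [_ e1] h1 [_ e2] h3; rewrite e1 e2 h1 h3.
- move=> [i11 e11] [i21 e21] [i12 e12] [i22 e22].
  case: (classic (q1 = q2)) => [eq|nq]; first by rewrite e11 e12 eq.
  have EL := aff_two nq i11 i12 i21 i22; subst L'.
  exfalso; apply: ne; congr (inr (_, _)).
  by apply: (addrI (aff_gain L q1)); rewrite -e11 -e21.
Qed.

Lemma PB_X (x : F * F) (p2 p3 : PT) (m1 m2 m3 : LN) : I (inl x) m3 -> I p2 m3 -> I p2 m1 -> I p3 m1 ->
  I (inl x) m2 -> I p3 m2 -> I (inl x) m1 \/ I p2 m2 \/ I p3 m3.
Proof.
rewrite /add_act.
case: m1 => q1 u1; case: m2 => q2 u2; case: m3 => q3 u3 /= e3.
case: (classic (q1 = x)) => [->|nq]; first by left.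
case: p2 => [y|[L2 l2]]; case: p3 => [z|[L3 l3]] /=.
- by move=> h1 h2; exfalso; apply: nq; rewrite h2 -h1.
- by move=> h1 h2; exfalso; apply: nq; rewrite h2 -h1.
- by move=> _ _ h1 e2 h2; exfalso; apply: nq; rewrite h1 -h2 e2.
- move=> [i32 e32] [i12 e12] [i13 e13] e2 [i23 e23].
  rewrite e3 in i32; rewrite e2 in i23.
  have EL := aff_two nq i12 i32 i13 i23; subst L3.
  have el : l2 = l3 by apply: (addrI (aff_gain L2 q1)); rewrite -e12 -e13.
  subst l3; right; left; split => //; by rewrite e2.
Qed.

Lemma PB_Y L1 (l1 : F) L2 (l2 : F) L3 (l3 : F) (m1 m2 m3 : LN) :
  I (inr (L1, l1)) m3 -> I (inr (L2, l2)) m3 -> I (inr (L2, l2)) m1 -> I (inr (L3, l3)) m1 ->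
  I (inr (L1, l1)) m2 -> I (inr (L3, l3)) m2 ->
  I (inr (L1, l1)) m1 \/ I (inr (L2, l2)) m2 \/ I (inr (L3, l3)) m3.
Proof.
rewrite /add_act.
case: m1 => q1 u1; case: m2 => q2 u2; case: m3 => q3 u3 /=.
move=> [h31 e31] [h32 e32] [h12 e12] [h13 e13] [h21 e21] [h23 e23].
case: (classic (L1 = L2)) => [EL|n12].
  subst L2; have el : l1 = l2 by apply: (addrI (aff_gain L1 q3)); rewrite -e31 -e32.
  by subst l2; left.
case: (classic (L2 = L3)) => [EL|n23].
  subst L3; have el : l2 = l3 by apply: (addrI (aff_gain L2 q1)); rewrite -e12 -e13.
  by subst l3; right; left.
case: (classic (L1 = L3)) => [EL|n13].
  subst L3; have el : l1 = l3 by apply: (addrI (aff_gain L1 q2)); rewrite -e21 -e23.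
  by subst l3; right; right.
case: (classic (q1 = q2)) => [E|nq12].
  subst q2; left; split => //; by rewrite e13 -e23 e21.
case: (classic (q2 = q3)) => [E|nq23].
  subst q3; right; left; split => //; by rewrite e21 -e31 e32.
case: (classic (q1 = q3)) => [E|nq13].
  subst q3; right; right; split => //; by rewrite e32 -e12 e13.
exfalso; apply: (tri_core (l1:=l1) (l2:=l2) (l3:=l3) n12 n23 n13 nq12 nq23 nq13 h31 h32 h12 h13 h21 h23).

- by rewrite -e31 -e32.
- by rewrite -e12 -e13.
- by rewrite -e21 -e23.
Qed.

Lemma PB (p1 p2 p3 : PT) (m1 m2 m3 : LN) : I p1 m3 -> I p2 m3 -> I p2 m1 -> I p3 m1 ->
  I p1 m2 -> I p3 m2 -> I p1 m1 \/ I p2 m2 \/ I p3 m3.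
Proof.
move=> h1 h2 h3 h4 h5 h6.
case: p1 h1 h5 => [x|[L1 l1]] h1 h5; first exact: PB_X h1 h2 h3 h4 h5 h6.
case: p2 h2 h3 => [x|[L2 l2]] h2 h3.
  have := PB_X h3 h4 h6 h5 h2 h1; tauto.
case: p3 h4 h6 => [x|[L3 l3]] h4 h6.
  have := PB_X h6 h5 h1 h2 h4 h3; tauto.
exact: PB_Y h1 h2 h3 h4 h5 h6.
Qed.

Definition lt2 q r : aff_line F :=
  if q.1 == r.1 then Vert q.1
  else NonVert ((r.2 - q.2) / (r.1 - q.1)) (q.2 - (r.2 - q.2) / (r.1 - q.1) * q.1).

Lemma lt2_q q r : aff_inc q (lt2 q r).
Proof. rewrite /lt2; case: eqP => //= _; ring. Qed.

Lemma lt2_r q r : aff_inc r (lt2 q r).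
Proof.
rewrite /lt2; case: eqP => //= ne.
have h : r.1 - q.1 != 0 by rewrite subr_eq0; apply/eqP => e; apply: ne.
field; exact: h.
Qed.

Lemma gdiff q r : aff_gain (lt2 q r) r - aff_gain (lt2 q r) q = r.1 * q.2 - q.1 * r.2.
Proof.
rewrite /lt2; case: eqP => /= e.
  rewrite -e; ring.
have h : r.1 - q.1 != 0 by rewrite subr_eq0; apply/eqP => e'; apply: e.
field; exact: h.
Qed.

Lemma C3 (P : PT) (l : LN) : exists (m : LN) (Q : PT), I P m /\ I Q m /\ I Q l.
Proof.
rewrite /add_act.
case: l => q u.
case: P => [p|[L l]].
  pose L := lt2 p q.
  exists (p, aff_gain L p + (u - aff_gain L q)), (inr (L, u - aff_gain L q)) => /=.
  split => //; split; first by split => //; exact: lt2_q.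
  split; [exact: lt2_r | ring].
case: (classic (aff_inc q L)) => [hq|nq].
  exists (q, aff_gain L q + l), (inl q) => /=; split => //.
have [r [hr er]] : exists r, aff_inc r L /\ r.1 * q.2 - q.1 * r.2 - aff_gain L r = l - u.
  case: L nq => [a|m0 b0] /= nq.
    have h : a - q.1 != 0 by rewrite subr_eq0; apply/eqP => e; apply: nq.
    exists (a, (l - u - a * q.2) / (a - q.1)) => /=; split => //; field; exact: h.
  have h : q.2 - m0 * q.1 - b0 != 0.
    apply/eqP => e; apply: nq.
    have -> : q.2 = (q.2 - m0 * q.1 - b0) + (m0 * q.1 + b0) by ring.
    by rewrite e add0r.
  exists ((l - u + q.1 * b0) / (q.2 - m0 * q.1 - b0), m0 * ((l - u + q.1 * b0) / (q.2 - m0 * q.1 - b0)) + b0) => /=.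
  split => //; field; exact: h.
pose L' := lt2 q r.
exists (r, aff_gain L r + l), (inr (L', u - aff_gain L' q)) => /=.
split => //; split.
  split; first exact: lt2_r.
  have := gdiff q r; rewrite -/L' => gd.
  have -> : aff_gain L' r = aff_gain L' q + (r.1 * q.2 - q.1 * r.2) by rewrite -gd; ring.
  have -> : aff_gain L r = r.1 * q.2 - q.1 * r.2 - (l - u) by rewrite -er; ring.
  ring.
split; [exact: lt2_q | ring].
Qed.

Lemma on_line (P : PT) : exists l : LN, I P l.
Proof.
case: P => [p|[L l]]; first by exists (p, 0).
case: L => [a|m b].
  by exists ((a, 0), aff_gain (Vert a) (a, 0) + l).
by exists ((0, m * 0 + b), aff_gain (NonVert m b) (0, m * 0 + b) + l).
Qed.
End Aff.


Theorem theorem7 (F : fieldType) :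
  generalized_quadrangle
    (M_inc (@aff_inc F) (@add_act F) (@aff_gain F)).
Proof.
split.
  split; first exact: (inhabits (inl ((0 : F), (0 : F)))).
  split; first exact: (inhabits (((0 : F), (0 : F)), (0 : F))).
  by exists (inl ((0 : F), (0 : F))), (((0 : F), (0 : F)), (0 : F)).
split.
  case=> [P|l1] [Q|l2].
  - have [l' hl'] := on_line Q.
    have [m [R [h1 [h2 h3]]]] := C3 P l'.
    exists 4%N; split => //; exists [:: inr m; inl R; inr l'; inl Q].
    by split => //; split => //=.
  - have [m [R [h1 [h2 h3]]]] := C3 P l2.
    exists 3%N; split => //; exists [:: inr m; inl R; inr l2].
    by split => //; split => //=.
  - have [m [R [h1 [h2 h3]]]] := C3 Q l1.
    exists 3%N; split => //; exists [:: inl R; inr m; inl Q].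
    by split => //; split => //=.
  - have hP : M_inc (@aff_inc F) (@add_act F) (@aff_gain F) (inl l1.1) l1 by [].
    have [m [R [h1 [h2 h3]]]] := C3 (inl l1.1) l2.
    exists 4%N; split => //; exists [:: inl (inl l1.1); inr m; inl R; inr l2].
    by split => //; split => //=.
move=> u v k hk hd s1 s2.
exact: (uniq_chain _ _ _ (@PA F) (@PB F) _ _ _ hk hd).
Qed.
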